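(* Let $\tau$ be a $T_1$-topology on the bicyclic monoid $\mathcal{C}(p,q)$ such that $(\mathcal{C}(p,q),\tau)$ is a semitopological semigroup (i.e. the semigroup operation is separately continuous) and the topological space $(\mathcal{C}(p,q),\tau)$ is a Baire space. Then $\tau$ is the discrete topology.
   Context: The bicyclic monoid $\mathcal{C}(p,q)$ is the monoid with identity $1$ generated by two elements $p,q$ subject only to $pq=1$. Every element has a unique form $q^ip^j$ with $i,j\in\omega=\{0,1,2,\dots\}$, and multiplication is $q^kp^l\cdot q^mp^n = q^{k-l+m}p^n$ if $l<m$, $=q^kp^n$ if $l=m$, $=q^kp^{l-m+n}$ if $l>m$. A topological space $X$ is Baire if for every sequence $A_1,A_2,\dots$ of dense open subsets of $X$ the intersection $\bigcap_{i=1}^\infty A_i$ is dense in $X$. *)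

(* Defs.v *)
From Stdlib Require Import Arith.

(** The bicyclic monoid C(p,q): the element q^i p^j is encoded as the pair (i,j). *)
Definition bicyclic : Type := (nat * nat)%type.

(** q^k p^l * q^m p^n = q^(k-l+m) p^n if l<m, q^k p^n if l=m, q^k p^(l-m+n) if l>m. *)
Definition bmul (a b : bicyclic) : bicyclic :=
  let (k, l) := a in
  let (m, n) := b in
  if l <? m then (k + (m - l), n)
  else if l =? m then (k, n)
  else (k, (l - m) + n).

Definition bone : bicyclic := (0, 0).
Definition bp : bicyclic := (0, 1).
Definition bq : bicyclic := (1, 0).

Definition is_topology (O : (bicyclic -> Prop) -> Prop) : Prop :=
  O (fun _ => True) /\
  O (fun _ => False) /\
  (forall U V, O U -> O V -> O (fun x => U x /\ V x)) /\
  (forall F : (bicyclic -> Prop) -> Prop,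
      (forall U, F U -> O U) -> O (fun x => exists U, F U /\ U x)).

Definition T1 (O : (bicyclic -> Prop) -> Prop) : Prop :=
  forall x y : bicyclic, x <> y -> exists U, O U /\ U x /\ ~ U y.

Definition semitopological (O : (bicyclic -> Prop) -> Prop) : Prop :=
  forall a : bicyclic, forall U, O U ->
    O (fun x => U (bmul a x)) /\ O (fun x => U (bmul x a)).

Definition dense (O : (bicyclic -> Prop) -> Prop) (A : bicyclic -> Prop) : Prop :=
  forall V, O V -> (exists x, V x) -> exists x, V x /\ A x.

Definition baire (O : (bicyclic -> Prop) -> Prop) : Prop :=
  forall A : nat -> (bicyclic -> Prop),
    (forall n, O (A n) /\ dense O (A n)) -> dense O (fun x => forall n, A n x).

Definition discrete (O : (bicyclic -> Prop) -> Prop) : Prop :=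
  forall U : bicyclic -> Prop, O U.

(* Main.v *)
Require Import Defs.
From Stdlib Require Import Arith Lia List Classical FunctionalExtensionality PropExtensionality Cantor.
Import ListNotations.

Section S.
Variable O : (bicyclic -> Prop) -> Prop.

Definition isol (y : bicyclic) := exists V, O V /\ V y /\ forall z, V z -> z = y.

Lemma list_sep (HT : is_topology O) (H1 : T1 O) (y : bicyclic) (L : list bicyclic) :
  exists W, O W /\ W y /\ forall x, In x L -> x <> y -> ~ W x.
Proof.
  destruct HT as [HTt [HTf [HTi HTu]]].
  induction L as [|a L IH].
  - exists (fun _ => True). split; [auto|split; [auto|]]. intros x [].
  - destruct IH as [W [HW [Wy HWn]]].
    destruct (classic (a = y)) as [E|E].
    + exists W. split; [exact HW|split; [exact Wy|]]. intros x [<-|Hx] Hne; [contradiction|auto].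
    + destruct (H1 y a (fun h => E (eq_sym h))) as [U [HU [Uy Ua]]].
      exists (fun x => U x /\ W x). split; [auto|split; [auto|]].
      intros x [<-|Hx] Hne [Ux Wx]; [contradiction|]. exact (HWn x Hx Hne Wx).
Qed.

Lemma box_isol (HT : is_topology O) (H1 : T1 O) (y : bicyclic) U k l :
  O U -> U y -> (forall z, U z -> fst z <= k /\ snd z <= l) -> isol y.
Proof.
  intros HU Uy Hb.
  destruct (list_sep HT H1 y (list_prod (seq 0 (S k)) (seq 0 (S l)))) as [W [HW [Wy HWn]]].
  destruct HT as [HTt [HTf [HTi HTu]]].
  exists (fun x => U x /\ W x). split; [auto|split; [auto|]].
  intros z [Uz Wz]. destruct (classic (z = y)) as [E|E]; auto.
  exfalso. apply (HWn z); auto. destruct z as [m n]. destruct (Hb _ Uz) as [Hm Hn].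
  apply in_prod; apply in_seq; simpl in *; lia.
Qed.

Lemma shift_eq a b m n : bmul (bmul (a,0) (m,n)) (0,b) = (m+a, n+b).
Proof.
  unfold bmul. destruct (0 <? m) eqn:E1.
  - destruct (n <? 0) eqn:E2; [apply Nat.ltb_lt in E2; lia|].
    destruct (n =? 0) eqn:E3; [apply Nat.eqb_eq in E3; subst; f_equal; lia|].
    f_equal; lia.
  - destruct m; [|apply Nat.ltb_ge in E1; lia]. simpl.
    destruct (n <? 0) eqn:E2; [apply Nat.ltb_lt in E2; lia|].
    destruct (n =? 0) eqn:E3; [apply Nat.eqb_eq in E3; subst; f_equal; lia|].
    f_equal; lia.
Qed.

Lemma pre_box k l m n : bmul (0,k) (bmul (m,n) (l,0)) = (0,0) -> m <= k /\ n <= l.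
Proof.
  unfold bmul. destruct (n <? l) eqn:E1.
  - apply Nat.ltb_lt in E1.
    destruct (k <? m + (l - n)) eqn:E2; [intros H; injection H; lia|].
    apply Nat.ltb_ge in E2.
    destruct (k =? m + (l - n)) eqn:E3; [apply Nat.eqb_eq in E3; lia|].
    intros H; injection H; lia.
  - destruct (n =? l) eqn:E3.
    + apply Nat.eqb_eq in E3. subst.
      destruct (k <? m) eqn:E2; [intros H; injection H; lia|].
      apply Nat.ltb_ge in E2. lia.
    + apply Nat.ltb_ge in E1. apply Nat.eqb_neq in E3.
      destruct (k <? m) eqn:E2; [intros H; injection H; lia|].
      destruct (k =? m) eqn:E4; [intros H; injection H; lia|].
      intros H; injection H; lia.
Qed.

Lemma pre_self k l : bmul (0,k) (bmul (k,l) (l,0)) = (0,0).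
Proof.
  unfold bmul. rewrite Nat.ltb_irrefl, Nat.eqb_refl, Nat.ltb_irrefl, Nat.eqb_refl. reflexivity.
Qed.

End S.

Theorem theorem1 (O : (bicyclic -> Prop) -> Prop) :
  is_topology O -> T1 O -> semitopological O -> baire O -> discrete O.
Proof.
  intros HT H1 HS HB.
  assert (HT' := HT). destruct HT' as [HTt [HTf [HTi HTu]]].
  assert (Ex : exists y, isol O y).
  { apply NNPP. intro Hno.
    set (A := fun n x => exists V, (O V /\ ~ V (of_nat n)) /\ V x).
    assert (HA : forall n, O (A n) /\ dense O (A n)).
    { intro n. split.
      - apply HTu. intros U [HU _]; exact HU.
      - intros V HV [x0 Vx0].
        assert (Ex1 : exists x, V x /\ x <> of_nat n).
        { apply NNPP. intro Hn. apply Hno. exists (of_nat n).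
          exists V. repeat split; auto.
          - destruct (classic (x0 = of_nat n)) as [E|E]; [subst; auto|].
            exfalso; apply Hn; eauto.
          - intros z Vz. apply NNPP. intro E. apply Hn; eauto. }
        destruct Ex1 as [x [Vx Hx]].
        destruct (H1 x (of_nat n) Hx) as [U [HU [Ux Un]]].
        exists x. split; auto. exists U; auto. }
    destruct (HB A HA (fun _ => True) HTt (ex_intro _ (0,0) I)) as [x [_ Hx]].
    destruct (Hx (to_nat x)) as [V [[_ Vn] Vx]].
    rewrite cancel_of_to in Vn. contradiction. }
  assert (H00 : isol O (0,0)).
  { destruct Ex as [[i j] [V [HV [Vy Vu]]]].
    exists (fun z => V (bmul (bmul (i,0) z) (0,j))). repeat split.
    - apply (proj1 (HS (i,0) (fun x => V (bmul x (0,j))) (proj2 (HS (0,j) V HV)))).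
    - rewrite shift_eq. simpl. exact Vy.
    - intros [m n] Hz. rewrite shift_eq in Hz. apply Vu in Hz.
      injection Hz; intros; f_equal; lia. }
  assert (Hall : forall y, isol O y).
  { intros [k l]. destruct H00 as [V [HV [Vy Vu]]].
    apply (box_isol O HT H1 (k,l) (fun z => V (bmul (0,k) (bmul z (l,0)))) k l).
    - apply (proj2 (HS (l,0) (fun x => V (bmul (0,k) x)) (proj1 (HS (0,k) V HV)))).
    - rewrite pre_self. exact Vy.
    - intros [m n] Hz. apply Vu in Hz. apply pre_box in Hz. exact Hz. }
  intro U.
  set (F := fun V => exists y, U y /\ O V /\ V y /\ forall z, V z -> z = y).
  assert (HF : O (fun x => exists V, F V /\ V x)).
  { apply HTu. intros V [y [_ [HV _]]]. exact HV. }
  replace U with (fun x => exists V, F V /\ V x); [exact HF|].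
  apply functional_extensionality. intro x. apply propositional_extensionality. split.
  - intros [V [[y [Uy [_ [_ Vu]]]] Vx]]. rewrite (Vu x Vx). exact Uy.
  - intros Ux. destruct (Hall x) as [V [HV [Vx Vu]]]. exists V. split; auto.
    exists x. auto.
Qed.
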